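(* Let $m\ge 2$, $R>0$, $\alpha\le 0$, and $h\in C^2([0,\infty))$ with $h''(r)\ge 0$ on $(0,\infty)$. Let $\mu_1$ be the first eigenvalue of the problem $$w''+\Big(\frac{m-1}{r}+h'(r)\Big)w'+\Big(\lambda-\frac{m-1}{r^2}\Big)w=0\ \text{ in }(0,R),\qquad w(0)=0,\quad w'(R)+\alpha w(R)=0,$$ and let $g$ be a corresponding eigenfunction, chosen positive on $(0,R]$ with $g'(0)=1$. Then: (1) $g'(r)>0$ for all $r\in(0,R)$; (2) if in addition $\alpha\ge -\frac2R$, then $g'(r)\ge -\alpha g(r)$ for all $r\in(0,R]$.
   Context: $\mu_1$ admits the variational characterization $\mu_1=\inf\{\frac{\int_0^R(g'^2+\frac{m-1}{r^2}g^2)r^{m-1}e^{h(r)}dr+\alpha g(R)^2R^{m-1}e^{h(R)}}{\int_0^R g^2r^{m-1}e^{h(r)}dr}: g\in W^{1,2}((0,R)),\ g(0)=0\}$. *)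

(* Defs.v *)
From Stdlib Require Import Reals Lra.
From Coquelicot Require Import Coquelicot.
Open Scope R_scope.

Definition C2_on_nonneg (h : R -> R) : Prop :=
  forall r, 0 <= r ->
    ex_derive h r /\ ex_derive (Derive h) r /\
    continuous (Derive (Derive h)) r.

Definition has_right_deriv (w : R -> R) (a d : R) : Prop :=
  filterlim (fun r => (w r - w a) / (r - a)) (at_right a) (locally d).

Definition is_eigenfunction (m : nat) (Rad alpha : R) (h : R -> R)
    (lam : R) (w : R -> R) : Prop :=
  (forall r, 0 < r <= Rad -> ex_derive w r) /\
  (forall r, 0 < r < Rad -> ex_derive (Derive w) r) /\
  (forall r, 0 < r < Rad ->
     Derive (Derive w) r + ((INR m - 1) / r + Derive h r) * Derive w r
     + (lam - (INR m - 1) / r ^ 2) * w r = 0) /\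
  w 0 = 0 /\
  filterlim w (at_right 0) (locally 0) /\
  Derive w Rad + alpha * w Rad = 0 /\
  (exists r, 0 < r <= Rad /\ w r <> 0).

Definition is_eigenvalue (m : nat) (Rad alpha : R) (h : R -> R) (lam : R) : Prop :=
  exists w, is_eigenfunction m Rad alpha h lam w.

Definition is_first_eigenvalue (m : nat) (Rad alpha : R) (h : R -> R) (mu : R) : Prop :=
  is_eigenvalue m Rad alpha h mu /\
  (forall lam, is_eigenvalue m Rad alpha h lam -> mu <= lam).

(* Main.v *)
Require Import Defs.
From Stdlib Require Import Reals.
From Coquelicot Require Import Coquelicot.
From Stdlib Require Import Lra.
Open Scope R_scope.

Lemma mvt_strict (f df : R -> R) a b : a < b ->
  (forall x, a < x < b -> is_derive f x (df x)) ->
  (forall x, a <= x <= b -> continuity_pt f x) ->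
  exists c, a < c < b /\ f b - f a = df c * (b - a).
Proof.
intros Hab Hd Hc.
pose (pr1 := fun c (P : a < c < b) =>
  exist (fun l => derivable_pt_abs f c l) (df c) (proj1 (is_derive_Reals _ _ _) (Hd c P))).
pose (pr2 := fun c (P : a < c < b) => derivable_pt_id c).
destruct (MVT f id a b pr1 pr2 Hab Hc) as [c [P Hc']].
{ intros; apply derivable_continuous_pt, derivable_pt_id. }
exists c; split; auto.
rewrite derive_pt_id in Hc'. unfold id in Hc'. simpl in Hc'. lra.
Qed.

Lemma cont_of_derive (f : R -> R) x l : is_derive f x l -> continuity_pt f x.
Proof.
intros H. apply continuity_pt_filterlim. apply (ex_derive_continuous (K:=R_AbsRing) (V:=R_NormedModule)). exists l; exact H.
Qed.

Lemma key (n b mu Rad : R) (h g : R -> R) :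
  1 <= n -> 0 < Rad -> 0 <= b -> b * Rad <= 2 ->
  C2_on_nonneg h ->
  (forall r, 0 < r -> 0 <= Derive (Derive h) r) ->
  (forall r, 0 < r <= Rad -> ex_derive g r) ->
  (forall r, 0 < r < Rad -> ex_derive (Derive g) r) ->
  (forall r, 0 < r < Rad ->
     Derive (Derive g) r + (n / r + Derive h r) * Derive g r
     + (mu - n / r ^ 2) * g r = 0) ->
  filterlim g (at_right 0) (locally 0) ->
  (forall r, 0 < r <= Rad -> 0 < g r) ->
  0 <= Derive g Rad - b * g Rad ->
  forall r, 0 < r < Rad -> 0 < Derive g r - b * g r.
Proof.
intros Hn HR Hb HbR Hh Hh2 Hg1 Hg2 Hode Hg0 Hpos Hbc.
set (E := fun r => exp (n * ln r + h r + b * r)).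
set (W := fun r => E r * (Derive g r - b * g r)).
set (phi := fun r => n * (/r)^2 - b*n*/r - b * Derive h r - b^2 - mu).
set (G := fun r => exp (-(b*r)) * g r).
assert (HE: forall r, 0 < E r) by (intros; apply exp_pos).
assert (HW: forall r, 0<r<Rad -> is_derive W r (E r * g r * phi r)).
{ intros r Hr. unfold W, E. auto_derive.
  - destruct (Hh r ltac:(lra)) as [? _].
    repeat split; try lra; auto; try (apply Hg2; lra); try (apply Hg1; lra).
  - change (Derive (fun x => Derive g x) r) with (Derive (Derive g) r).
    change (Derive (fun x => h x) r) with (Derive h r).
    change (Derive (fun x => g x) r) with (Derive g r).
    assert (Ho := Hode r Hr).
    replace (Derive (Derive g) r) with
      (- ((n / r + Derive h r) * Derive g r + (mu - n / r ^ 2) * g r)) by lra.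
    unfold phi. field. lra. }
assert (Hphi: forall s t, 0<s -> s<t -> t<=Rad -> phi t < phi s).
{ intros s t Hs Hst HtR.
  assert (Hhd: Derive h s <= Derive h t).
  { destruct (mvt_strict (Derive h) (Derive (Derive h)) s t Hst) as [c [Hc Heq]].
    - intros x Hx. destruct (Hh x ltac:(lra)) as [_ [[l Hl] _]].
      rewrite (is_derive_unique _ _ _ Hl). exact Hl.
    - intros x Hx. destruct (Hh x ltac:(lra)) as [_ [[l Hl] _]].
      exact (cont_of_derive _ _ _ Hl).
    - assert (0 <= Derive (Derive h) c) by (apply Hh2; lra). nra. }
  unfold phi.
  set (a := / s). set (c := / t).
  assert (Hc0: 0 < c) by (apply Rinv_0_lt_compat; lra).
  assert (Hac: c < a) by (apply Rinv_lt_contravar; nra).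
  assert (Hbc2: b <= 2 * c).
  { unfold c. apply (Rmult_le_reg_r t). lra. field_simplify; nra. }
  assert (n * (a - c) * (a + c - b) > 0).
  { apply Rmult_lt_0_compat. nra. lra. }
  nra. }
assert (HG: forall r, 0<r<=Rad -> is_derive G r (exp(-(b*r)) * (Derive g r - b*g r))).
{ intros r Hr. unfold G. auto_derive.
  - repeat split; try (apply Hg1; lra).
  - change (Derive (fun x => g x) r) with (Derive g r). ring. }
assert (HWG: forall r, exp(-(b*r)) * (Derive g r - b * g r) = exp(-(b*r)) / E r * W r).
{ intros r. unfold W. field. apply Rgt_not_eq, HE. }
assert (HWc: forall r, 0<r<Rad -> continuity_pt W r).
{ intros r Hr. exact (cont_of_derive _ _ _ (HW r Hr)). }
assert (HGc: forall r, 0<r<=Rad -> continuity_pt G r).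
{ intros r Hr. exact (cont_of_derive _ _ _ (HG r Hr)). }
assert (Hfac: forall r, 0 < exp(-(b*r)) / E r).
{ intros r. apply Rdiv_lt_0_compat. apply exp_pos. apply HE. }
intros r1 Hr1.
assert (HWpos: W r1 > 0).
2:{ unfold W in HWpos. assert (H1 := HE r1). nra. }
destruct (Rle_or_lt (W r1) 0) as [Hle|Hgt]; [exfalso|lra].
destruct (Rlt_or_le 0 (phi r1)) as [Hp|Hp].
- assert (Hneg: forall r, 0<r<r1 -> W r < 0).
  { intros r Hr.
    destruct (mvt_strict W (fun x => E x * g x * phi x) r r1) as [c [Hc Heq]]; try lra.
    + intros; apply HW; lra.
    + intros; apply HWc; lra.
    + assert (0 < E c * g c * phi c).
      { apply Rmult_lt_0_compat. apply Rmult_lt_0_compat. apply HE. apply Hpos; lra.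
        assert (phi r1 < phi c) by (apply Hphi; lra). lra. }
      assert (0 < E c * g c * phi c * (r1 - r)) by (apply Rmult_lt_0_compat; lra).
      lra. }
  set (r := r1 / 2).
  assert (HGr: 0 < G r).
  { unfold G. apply Rmult_lt_0_compat. apply exp_pos. apply Hpos. unfold r; lra. }
  apply filterlim_locally with (eps := mkposreal (G r) HGr) in Hg0.
  destruct Hg0 as [d Hd].
  set (s := Rmin r d / 2).
  assert (Hs: 0 < s < r).
  { unfold s. assert (0 < d) by apply cond_pos.
    assert (Rmin r d <= r) by apply Rmin_l.
    assert (0 < Rmin r d) by (apply Rmin_pos; unfold r; lra). lra. }
  assert (Hgs: Rabs (g s - 0) < G r).
  { apply (Hd s); [|lra]. change (Rabs (s - 0) < d). rewrite Rminus_0_r, Rabs_pos_eq by lra.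
    unfold s. assert (0 < d) by apply cond_pos.
    assert (Rmin r d <= d) by apply Rmin_r. lra. }
  rewrite Rminus_0_r, Rabs_pos_eq in Hgs by (apply Rlt_le, Hpos; unfold r in Hs; lra).
  assert (HGs: G s <= g s).
  { unfold G. assert (exp (-(b*s)) <= 1).
    { rewrite <- exp_0. assert (0 <= b * s) by nra. destruct (Rle_lt_or_eq_dec 0 (b*s) H) as [H'|H'].
      - apply Rlt_le, exp_increasing. lra.
      - rewrite <- H'. replace (-0) with 0 by ring. lra. }
    assert (0 < g s) by (apply Hpos; unfold r in Hs; lra). nra. }
  destruct (mvt_strict G (fun x => exp(-(b*x)) * (Derive g x - b*g x)) s r) as [c [Hc Heq]]; try lra.
  + intros; apply HG; unfold r in *; lra.
  + intros; apply HGc; unfold r in *; lra.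
  + rewrite HWG in Heq.
    assert (W c < 0) by (apply Hneg; unfold r in *; lra).
    assert (Hf := Hfac c).
    assert (exp (- (b * c)) / E c * W c * (r - s) < 0).
    { assert (exp (- (b * c)) / E c * W c < 0) by nra. nra. }
    lra.
- set (r2 := (r1 + Rad) / 2).
  assert (Hdec: forall a c, r1 <= a -> a < c -> c < Rad -> W c < W a).
  { intros a c Ha Hac HcR.
    destruct (mvt_strict W (fun x => E x * g x * phi x) a c) as [e [He Heq]]; try lra.
    + intros; apply HW; lra.
    + intros; apply HWc; lra.
    + assert (E e * g e * phi e < 0).
      { assert (phi e < phi r1) by (apply Hphi; lra).
        assert (0 < E e * g e). apply Rmult_lt_0_compat. apply HE. apply Hpos; lra.
        nra. }
      assert (E e * g e * phi e * (c - a) < 0) by nra. lra. }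
  assert (HWr2: W r2 < 0) by (assert (W r2 < W r1) by (apply Hdec; unfold r2; lra); lra).
  assert (HWle: forall x, r2 <= x < Rad -> W x <= W r2).
  { intros x Hx. destruct (Req_dec x r2) as [->|]; [lra|].
    apply Rlt_le, Hdec; unfold r2 in *; lra. }
  set (psi := fun x => exp(-(b*x)) / E x * W r2).
  assert (Hpsi: psi Rad < 0) by (unfold psi; assert (Hf := Hfac Rad); nra).
  assert (Hpsic: continuity_pt psi Rad).
  { apply (cont_of_derive _ _ (Derive psi Rad)). apply Derive_correct.
    unfold psi, E. auto_derive. destruct (Hh Rad ltac:(lra)) as [? _].
    repeat split; auto. apply Rgt_not_eq, exp_pos. }
  destruct (Hpsic (- psi Rad / 2) ltac:(lra)) as [alp [Halp Hcont]].
  assert (HGR := HG Rad ltac:(lra)).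
  apply is_derive_Reals in HGR.
  destruct (HGR (- psi Rad / 2) ltac:(lra)) as [delta Hdelta].
  set (hh := - Rmin (Rmin alp delta) (Rad - r2) / 2).
  assert (Hmin: 0 < Rmin (Rmin alp delta) (Rad - r2)).
  { apply Rmin_pos. apply Rmin_pos. lra. apply cond_pos. unfold r2; lra. }
  assert (Hm1: Rmin (Rmin alp delta) (Rad - r2) <= Rmin alp delta) by apply Rmin_l.
  assert (Hm2: Rmin (Rmin alp delta) (Rad - r2) <= Rad - r2) by apply Rmin_r.
  assert (Hm3: Rmin alp delta <= alp) by apply Rmin_l.
  assert (Hm4: Rmin alp delta <= delta) by apply Rmin_r.
  set (x := Rad + hh).
  assert (Hx: r2 < x < Rad) by (unfold x, hh; lra).
  destruct (mvt_strict G (fun x => exp(-(b*x)) * (Derive g x - b*g x)) x Rad) as [c [Hc Heq]]; try lra.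
  + intros; apply HG; unfold r2 in *; lra.
  + intros; apply HGc; unfold r2 in *; lra.
  + rewrite HWG in Heq.
    assert (Hc1: exp (- (b * c)) / E c * W c <= psi c).
    { unfold psi. assert (Hf := Hfac c). assert (W c <= W r2) by (apply HWle; lra). nra. }
    assert (Hc2: psi c < psi Rad / 2).
    { assert (Hr := Hcont c). unfold R_dist in Hr. simpl in Hr.
      assert (Rabs (psi c - psi Rad) < - psi Rad / 2).
      { apply Hr. split; [split; [exact I|lra]|]. change (Rabs (c - Rad) < alp). rewrite Rabs_left; [|lra]. unfold x, hh in *; lra. }
      apply Rabs_def2 in H. lra. }
    assert (Hq := Hdelta hh ltac:(unfold hh; lra)
      ltac:(rewrite Rabs_left; [|unfold hh; lra]; unfold hh; lra)).
    fold x in Hq.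
    assert (Hqe: (G x - G Rad) / hh = exp (- (b * c)) / E c * W c).
    { replace (G x - G Rad) with (- (exp (- (b * c)) / E c * W c * (Rad - x))) by lra.
      unfold x. field. split; [apply Rgt_not_eq, HE|unfold hh; lra]. }
    rewrite Hqe in Hq.
    apply Rabs_def2 in Hq.
    assert (0 <= exp (- (b * Rad)) * (Derive g Rad - b * g Rad)).
    { apply Rmult_le_pos; [apply Rlt_le, exp_pos|lra]. }
    lra.
Qed.

Theorem proposition2p2 (m : nat) (Rad alpha : R) (h : R -> R) (mu1 : R) (g : R -> R) :
  (2 <= m)%nat -> 0 < Rad -> alpha <= 0 ->
  C2_on_nonneg h ->
  (forall r, 0 < r -> 0 <= Derive (Derive h) r) ->
  is_first_eigenvalue m Rad alpha h mu1 ->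
  is_eigenfunction m Rad alpha h mu1 g ->
  (forall r, 0 < r <= Rad -> 0 < g r) ->
  has_right_deriv g 0 1 ->
  (forall r, 0 < r < Rad -> 0 < Derive g r) /\
  (-2 / Rad <= alpha -> forall r, 0 < r <= Rad -> Derive g r >= - alpha * g r).
Proof.
intros Hm HR Ha Hh Hh2 _ [Hg1 [Hg2 [Hode [_ [Hg0 [Hbc _]]]]]] Hpos _.
assert (Hn: 1 <= INR m - 1).
{ apply le_INR in Hm. simpl in Hm. lra. }
assert (HgR := Hpos Rad ltac:(lra)).
split.
- intros r Hr.
  assert (H := key (INR m - 1) 0 mu1 Rad h g Hn HR ltac:(lra) ltac:(lra) Hh Hh2 Hg1 Hg2 Hode Hg0 Hpos
    ltac:(nra) r Hr). lra.
- intros Ha2 r Hr.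
  assert (HaR: -2 <= alpha * Rad).
  { assert (-2 / Rad * Rad = -2) by (field; lra). nra. }
  destruct (Req_dec r Rad) as [->|Hne]; [lra|].
  assert (H := key (INR m - 1) (- alpha) mu1 Rad h g Hn HR ltac:(lra) ltac:(lra) Hh Hh2 Hg1 Hg2 Hode Hg0 Hpos
    ltac:(lra) r ltac:(lra)). lra.
Qed.
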